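(* Let $r \geq 3$ and let $G$ be a graph on vertex set $[n]$ that percolates in the $K_r$-bootstrap percolation process, i.e. $\langle G \rangle_{K_r} = E(K_n)$. Then $G$ is $(r-2)$-connected.
   Context: $K_r$-bootstrap percolation: for a graph $G$ on vertex set $[n]$ (identified with its edge set $\subseteq E(K_n)$), set $G_0 := G$ and $G_{t+1} := G_t \cup \{e \in E(K_n) : \exists$ a copy $H$ of $K_r$ with $e \in H \subseteq G_t \cup \{e\}\}$; the closure is $\langle G \rangle_{K_r} := \bigcup_t G_t$, and $G$ percolates if its closure is all of $E(K_n)$. *)

(* Defs.v *)
From mathcomp Require Import all_boot.
Set Implicit Arguments.
Unset Strict Implicit.
Unset Printing Implicit Defensive.

(* A graph on vertex set [n] = 'I_n is identified with its edge set, a set of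
   2-element subsets of 'I_n, i.e. a subset of E(K_n). *)
Definition edgesKn (n : nat) : {set {set 'I_n}} := [set e : {set 'I_n} | #|e| == 2].

Definition is_graph (n : nat) (G : {set {set 'I_n}}) : Prop :=
  G \subset edgesKn n.

Definition clique_edges (n : nat) (S : {set 'I_n}) : {set {set 'I_n}} :=
  [set e : {set 'I_n} | (#|e| == 2) && (e \subset S)].

(* One step of K_r-bootstrap percolation:
   G_{t+1} = G_t ∪ {e ∈ E(K_n) : ∃ copy H of K_r with e ∈ H ⊆ G_t ∪ {e}}.
   A copy of K_r is the clique on an r-element vertex set S. *)
Definition Kr_step (n r : nat) (G : {set {set 'I_n}}) : {set {set 'I_n}} :=
  G :|: [set e in edgesKn n | [exists S : {set 'I_n},
          [&& #|S| == r, e \in clique_edges S & clique_edges S \subset e |: G]]].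

Definition in_closure (n r : nat) (G : {set {set 'I_n}}) (e : {set 'I_n}) : Prop :=
  exists t : nat, e \in iter t (Kr_step r) G.

Definition percolates (n r : nat) (G : {set {set 'I_n}}) : Prop :=
  forall e, e \in edgesKn n -> in_closure r G e.

Definition adj_avoid (n : nat) (G : {set {set 'I_n}}) (X : {set 'I_n}) : rel 'I_n :=
  fun x y => [&& [set x; y] \in G, x \notin X & y \notin X].

(* k-connected (Diestel's convention): more than k vertices, and G - X is
   connected for every vertex set X with |X| < k. *)
Definition k_connected (n k : nat) (G : {set {set 'I_n}}) : Prop :=
  k < n /\
  forall X : {set 'I_n}, #|X| < k ->
    forall u v : 'I_n, u \notin X -> v \notin X -> connect (adj_avoid G X) u v.

(* Main.v *)
Require Import Defs.
From mathcomp Require Import all_boot.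
From mathcomp Require Import zify.

Theorem mainTheorem5 (n r : nat) (G : {set {set 'I_n}}) :
  3 <= r -> r <= n.+1 -> is_graph G -> percolates r G -> k_connected (r - 2) G.
Proof.
move=> r3 rn _ perc; split.
  case: n G rn perc => [|n'] G0 rn _; lia.
move=> X HX u v uX vX.
apply/idPn => Hnc.
set C := [set x | (x \notin X) && connect (adj_avoid G X) u x].
have inv : forall t a b, a \in C -> b \notin C -> b \notin X ->
    [set a; b] \notin iter t (Kr_step r) G.
  elim=> [|t IH] a b aC bC bX /=.
    apply/negP => abG; move: bC; rewrite !inE bX /=.
    move: aC; rewrite inE => /andP [aX ua].
    apply/negP/negPn; apply: connect_trans ua (connect1 _).
    by rewrite /adj_avoid abG aX bX.
  rewrite /Kr_step inE negb_or (IH a b aC bC bX) /= inE negb_and; apply/orP; right.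
  apply/negP => /existsP [S /and3P [/eqP cS eS sub]].
  move: eS; rewrite inE => /andP [c2 abS].
  have aS : a \in S by apply: (subsetP abS); rewrite !inE eqxx.
  have bS : b \in S by apply: (subsetP abS); rewrite !inE eqxx orbT.
  have ab : a != b by apply/eqP => E; move: c2; rewrite E setUid cards1.
  have : 0 < #|S :\: (X :|: [set a; b])|.
    rewrite cardsD.
    have h1 : #|S :&: (X :|: [set a; b])| <= #|X| + 2.
      apply: leq_trans (subset_leq_card (subsetIr _ _)) _.
      apply: leq_trans (leq_card_setU _ _) _.
      by rewrite leq_add2l cards2 ab.
    rewrite cS; lia.
  rewrite card_gt0 => /set0Pn [c]; rewrite !inE negb_or => /andP [/andP [cX cab] cSS].
  move: cab; rewrite negb_or => /andP [ca cb].
  have memG : forall x y, x \in S -> y \in S -> x != y ->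
      [set x; y] != [set a; b] -> [set x; y] \in iter t (Kr_step r) G.
    move=> x y xS yS xy ne.
    have : [set x; y] \in clique_edges S.
      rewrite inE cards2 xy /=; apply/subsetP => z; rewrite !inE.
      by case/orP => /eqP ->.
    move/(subsetP sub); rewrite !inE; case/orP => //; by rewrite (negbTE ne).
  case cC: (c \in C).
    have := IH c b cC bC bX; rewrite memG //.
    apply/negP => /eqP E; have : c \in [set a; b] by rewrite -E !inE eqxx.
    by rewrite !inE (negbTE ca) (negbTE cb).
  have := IH a c aC (negbT cC) cX; rewrite memG // ?(eq_sym a c) //.
  apply/negP => /eqP E; have : c \in [set a; b] by rewrite -E !inE eqxx orbT.
  by rewrite !inE (negbTE ca) (negbTE cb).
have uC : u \in C by rewrite inE uX connect0.
have vC : v \notin C by rewrite inE vX.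
have uv : u != v by apply/eqP => E; move: Hnc; rewrite E connect0.
have [t ht] : in_closure r G [set u; v] by apply: perc; rewrite inE cards2 uv.
by move: (inv t u v uC vC vX); rewrite ht.
Qed.
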